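(* Let $\mathbb{F}$ be a non-Archimedean local field with ring of integers $\mathcal{O}$, let $V$ and $W$ be finite-dimensional $\mathbb{F}$-vector spaces, and let $L\subset V$ be a lattice. Let $F_0\colon W\to V$ be an injective linear map. Then there exists a neighborhood $U$ of $F_0$ in $\mathrm{Hom}_{\mathbb{F}}(W,V)$ such that every $F\in U$ is injective and $$F^{-1}(\mathrm{Im}(F)\cap L)=F_0^{-1}(\mathrm{Im}(F_0)\cap L).$$
   Context: Finite-dimensional $\mathbb{F}$-vector spaces carry their natural (product) topology, and $\mathrm{Hom}_{\mathbb{F}}(W,V)$ is topologized as a finite-dimensional vector space. A lattice in $V$ is a compact open $\mathcal{O}$-submodule of $V$. *)

(* Defs.v *)
From HB Require Import structures.
From mathcomp Require Import all_boot all_order all_algebra.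
From mathcomp Require Import reals.
Set Implicit Arguments. Unset Strict Implicit. Unset Printing Implicit Defensive.
Import Order.TTheory GRing.Theory Num.Theory.
Local Open Scope ring_scope.

(* [B x e y] means "y lies in the open ball of radius e around x". *)
Section BallTopology.
Variables (R : realType) (T : Type) (B : T -> R -> T -> Prop).

Definition bopen (S : T -> Prop) : Prop :=
  forall x, S x -> exists2 e : R, 0 < e & forall y, B x e y -> S y.

Definition bnbhd (x : T) (U : T -> Prop) : Prop :=
  exists2 e : R, 0 < e & forall y, B x e y -> U y.

Definition bcompact (K : T -> Prop) : Prop :=
  forall (I : Type) (U : I -> T -> Prop),
    (forall i, bopen (U i)) ->
    (forall x, K x -> exists i, U i x) ->
    exists (k : nat) (f : 'I_k -> I), forall x, K x -> exists j, U (f j) x.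

Definition blocally_compact : Prop :=
  forall x : T, exists K, bcompact K /\ bnbhd x K.
End BallTopology.

Record nonarch_local_field (R : realType) (F : fieldType) := NALF {
  nabs : F -> R;
  nabs_ge0 : forall x, 0 <= nabs x;
  nabs_eq0 : forall x, nabs x = 0 <-> x = 0;
  nabsM : forall x y, nabs (x * y) = nabs x * nabs y;
  nabs_ultra : forall x y, nabs (x + y) <= Num.max (nabs x) (nabs y);
  nabs_nontriv : exists x, nabs x != 0 /\ nabs x != 1;
  nabs_complete : forall u : nat -> F,
    (forall e : R, 0 < e -> exists N, forall m n, (N <= m)%N -> (N <= n)%N ->
        nabs (u m - u n) < e) ->
    exists l, forall e : R, 0 < e -> exists N, forall n, (N <= n)%N -> nabs (u n - l) < e;
  nabs_loc_compact :
    blocally_compact (fun (x : F) (e : R) y => nabs (y - x) < e)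
}.

Section LocalFieldNotions.
Variables (R : realType) (F : fieldType) (K : nonarch_local_field R F).

Definition integers (a : F) : Prop := nabs K a <= 1.

Definition rball (n : nat) (x : 'rV[F]_n) (e : R) (y : 'rV[F]_n) : Prop :=
  forall j, nabs K (y 0 j - x 0 j) < e.

(* Topology on Hom(F^m, F^n) = 'M[F]_(m, n) as a finite-dim vector space. *)
Definition mball (m n : nat) (x : 'M[F]_(m, n)) (e : R) (y : 'M[F]_(m, n)) : Prop :=
  forall i j, nabs K (y i j - x i j) < e.

Definition is_lattice (n : nat) (L : 'rV[F]_n -> Prop) : Prop :=
  [/\ L 0,
      (forall u v, L u -> L v -> L (u + v)),
      (forall a u, integers a -> L u -> L (a *: u)),
      bopen (@rball n) L &
      bcompact (@rball n) L].
End LocalFieldNotions.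

(* Main.v *)
Require Import Defs.
From HB Require Import structures.
From mathcomp Require Import all_boot all_order all_algebra.
From mathcomp Require Import reals.
Import Order.TTheory GRing.Theory Num.Theory.
Local Open Scope ring_scope.

From mathcomp Require Import lra.
Section Aux.
Set Implicit Arguments. Unset Strict Implicit.
Variables (R : realType) (F : fieldType) (K : nonarch_local_field R F).
Local Notation na := (nabs K).

Lemma nabs0 : (na 0) = 0.
Proof. by apply/nabs_eq0. Qed.

Lemma nabs1 : (na 1) = 1.
Proof.
have h1 : (na 1) != 0 by apply/eqP => /nabs_eq0 /eqP; rewrite oner_eq0.
apply: (mulfI h1); rewrite mulr1 -nabsM mulr1 //.
Qed.

Lemma nabsN x : (na (- x)) = (na x).
Proof.
have hm : (na (-1)) = 1.
  have := nabsM K (-1) (-1); rewrite mulrNN mulr1 nabs1 => /esym/eqP.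
  rewrite -expr2 sqrf_eq1 => /orP[/eqP//|/eqP h].
  by have := nabs_ge0 K (-1); rewrite h ler0N1.
by rewrite -mulN1r nabsM hm mul1r.
Qed.

Lemma nabsB x y : (na (x - y)) = (na (y - x)).
Proof. by rewrite -nabsN opprB. Qed.

Lemma nabs_sub_le x y a : (na x) < a -> (na y) < a -> (na (x - y)) < a.
Proof.
move=> hx hy; apply: le_lt_trans (nabs_ultra K x (-y)) _.
by rewrite gt_max hx nabsN hy.
Qed.

Lemma mul_bound_lt p q (v : 'rV[F]_p) (A : 'M[F]_(p, q)) a b :
  0 < a -> 0 < b -> (forall i, (na (v 0 i)) < a) -> (forall i j, (na (A i j)) <= b) ->
  forall j, (na ((v *m A) 0 j)) < a * b.
Proof.
move=> a0 b0 hv hA j; rewrite mxE.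
apply: (big_ind (fun x => (na x) < a * b)).
- by rewrite nabs0 mulr_gt0.
- by move=> x y hx hy; apply: le_lt_trans (nabs_ultra K x y) _; rewrite gt_max hx hy.
- move=> i _; rewrite nabsM.
  apply: (@le_lt_trans _ _ ((na (v 0 i)) * b)); first by rewrite ler_wpM2l ?nabs_ge0.
  by rewrite ltr_pM2r.
Qed.

Lemma mul_bound_le p q (v : 'rV[F]_p) (A : 'M[F]_(p, q)) a b :
  0 <= a -> 0 <= b -> (forall i, (na (v 0 i)) <= a) -> (forall i j, (na (A i j)) <= b) ->
  forall j, (na ((v *m A) 0 j)) <= a * b.
Proof.
move=> a0 b0 hv hA j; rewrite mxE.
apply: (big_ind (fun x => (na x) <= a * b)).
- by rewrite nabs0 mulr_ge0.
- by move=> x y hx hy; apply: le_trans (nabs_ultra K x y) _; rewrite ge_max hx hy.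
- move=> i _; rewrite nabsM.
  by apply: ler_pM; rewrite ?nabs_ge0.
Qed.


Lemma le_sum_term (I : finType) (f : I -> R) i :
  (forall j, 0 <= f j) -> f i <= \sum_j f j.
Proof. by move=> h; rewrite (bigD1 i) //= lerDl sumr_ge0. Qed.

Lemma bound_back m n (F0 Fm : 'M[F]_(m,n)) (G : 'M[F]_(n,m)) (e Cg B : R) :
  F0 *m G = 1%:M -> 0 < Cg -> (forall i j, na (G i j) <= Cg) -> 0 <= e ->
  e * Cg < 1 -> (forall i j, na ((Fm - F0) i j) <= e) -> 0 < B ->
  forall x : 'rV[F]_m,
  (forall j, na ((x *m Fm) 0 j) < B) -> forall i, na (x 0 i) < B * Cg.
Proof.
move=> FG Cg0 hG e0 eC hD B0 x hx i.
have xE : x = (x *m Fm) *m G - (x *m (Fm - F0)) *m G.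
  by rewrite -mulmxBl mulmxBr subKr -mulmxA FG mulmx1.
case: (@arg_maxP _ _ 'I_m i predT (fun i => na (x 0 i)) isT) => i0 _ Hmax.
have hi : na (x 0 i) <= na (x 0 i0) := Hmax i isT.
apply: le_lt_trans hi _.
rewrite ltNge; apply/negP => ha.
set a := na (x 0 i0) in ha Hmax.
have a0 : 0 < a by apply: lt_le_trans ha; rewrite mulr_gt0.
have h1 : na (((x *m Fm) *m G) 0 i0) < B * Cg := mul_bound_lt B0 Cg0 hx hG i0.
have h2 : na (((x *m (Fm - F0)) *m G) 0 i0) <= a * e * Cg.
  apply: mul_bound_le; rewrite ?mulr_ge0 ?(ltW a0) ?(ltW Cg0) //.
  by apply: mul_bound_le; rewrite ?(ltW a0) // => k; apply: Hmax.
have : na (x 0 i0) < a.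
  rewrite {1}xE.
  rewrite [X in na X]mxE [X in _ + X]mxE.
  apply: nabs_sub_le; first exact: lt_le_trans h1 ha.
  by apply: le_lt_trans h2 _; rewrite -mulrA gtr_pMr.
by rewrite ltxx.
Qed.

End Aux.

Theorem proposition4p7 (R : realType) (F : fieldType)
  (K : nonarch_local_field R F) (m n : nat)
  (L : 'rV[F]_n -> Prop) (HL : is_lattice K L)
  (F0 : 'M[F]_(m, n)) (HF0 : injective (fun w : 'rV[F]_m => w *m F0)) :
  exists U : 'M[F]_(m, n) -> Prop,
    bnbhd (@mball R F K m n) F0 U /\
    forall Fm : 'M[F]_(m, n), U Fm ->
      injective (fun w : 'rV[F]_m => w *m Fm) /\
      (forall w : 'rV[F]_m,
         ((exists u : 'rV[F]_m, u *m Fm = w *m Fm) /\ L (w *m Fm)) <->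
         ((exists u : 'rV[F]_m, u *m F0 = w *m F0) /\ L (w *m F0))).
Proof.
case: HL => L0 LD LZ Lop Lcp.
have [G FG] : exists G, F0 *m G = 1%:M.
  by apply/row_freeP/inj_row_free => v hv; apply: HF0; rewrite /= hv mul0mx.
pose Cg : R := 1 + \sum_i \sum_j nabs K (G i j).
have hG : forall i j, nabs K (G i j) <= Cg.
  move=> i j; rewrite /Cg; apply: le_trans (ler_wpDl ler01 (lexx _)).
  apply: le_trans (le_sum_term _ _) => [|k]; last by rewrite sumr_ge0 // => *; exact: nabs_ge0.
  by apply: le_sum_term => k; exact: nabs_ge0.
have Cg0 : 0 < Cg.
  have : 0 <= \sum_i \sum_j nabs K (G i j) by rewrite !sumr_ge0 // => *; rewrite sumr_ge0 // => *; exact: nabs_ge0.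
  rewrite /Cg; lra.
have [r r0 hr] := Lop 0 L0.
have [Mb Mb0 hM] : exists2 Mb : R, 0 < Mb & forall x, L x -> forall j, nabs K (x 0 j) < Mb.
  pose U := fun (k : nat) (y : 'rV[F]_n) => forall j, nabs K (y 0 j) < k.+1%:R.
  have Uop : forall k, bopen (@rball R F K n) (U k).
    move=> k y hy; exists k.+1%:R; first by rewrite ltr0Sn.
    move=> y' hy' j; rewrite -(subrK (y 0 j) (y' 0 j)).
    by apply: le_lt_trans (nabs_ultra _ _ _) _; rewrite gt_max hy' hy.
  have Ucov : forall x, L x -> exists k, U k x.
    move=> x _; exists (Num.Def.archi_bound (\sum_j nabs K (x 0 j))) => j.
    apply: le_lt_trans (le_sum_term j (fun k => nabs_ge0 K (x 0 k))) _.
    apply: lt_le_trans (archi_boundP _) _; first by rewrite sumr_ge0 // => *; exact: nabs_ge0.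
    by rewrite ler_nat.
  have [k [f hf]] := Lcp nat U Uop Ucov.
  exists ((\max_(j < k) f j).+1)%:R; first by rewrite ltr0Sn.
  move=> x Lx j; have [j' hj'] := hf x Lx; apply: lt_le_trans (hj' j) _.
  by rewrite ler_nat ltnS leq_bigmax.
pose Mt := Mb + r.
have Mt0 : 0 < Mt by rewrite /Mt; lra.
pose e := r / (Mt * Cg).
have e0 : 0 < e by rewrite /e divr_gt0 // mulr_gt0.
have MCe : Mt * Cg * e = r.
  by rewrite /e mulrC divfK // mulf_neq0 // gt_eqF.
have eC : e * Cg < 1.
  have -> : e * Cg = r / Mt.
    by rewrite /e invfM mulrA divfK // gt_eqF.
  by rewrite ltr_pdivrMr // mul1r /Mt; lra.
have MbMt : Mb * Cg <= Mt * Cg by rewrite ler_pM2r // lerDl ltW.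
have small : forall w : 'rV[F]_m, (forall i, nabs K (w 0 i) < Mb * Cg) ->
    forall A : 'M[F]_(m, n), (forall i j, nabs K (A i j) <= e) -> L (w *m A).
  move=> w hw A hA; apply: hr => j /=; rewrite [(0 : 'rV[F]_n) 0 j]mxE subr0 -MCe.
  apply: mul_bound_lt => //; first by rewrite mulr_gt0.
  by move=> i; apply: lt_le_trans (hw i) MbMt.
exists (mball K F0 e); split; first by exists e.
move=> Fm hFm.
have hD : forall i j, nabs K ((Fm - F0) i j) <= e.
  by move=> i j; rewrite !mxE; apply: ltW; apply: hFm.
have hD2 : forall i j, nabs K ((F0 - Fm) i j) <= e.
  by move=> i j; rewrite !mxE nabsB; apply: ltW; apply: hFm.
have bb := bound_back FG Cg0 hG (ltW e0) eC hD.
split.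
  move=> w w' /= hww; apply/eqP; rewrite -subr_eq0; apply/eqP.
  have hx0 : (w - w') *m Fm = 0 by rewrite mulmxBl hww subrr.
  apply/rowP => i; rewrite [(0 : 'rV[F]_m) 0 i]mxE; apply/(nabs_eq0 K)/eqP.
  rewrite eq_le nabs_ge0 andbT leNgt; apply/negP => hpos.
  have hB := divr_gt0 hpos Cg0.
  have hlt : forall j, nabs K (((w - w') *m Fm) 0 j) < nabs K ((w - w') 0 i) / Cg.
    by move=> j; rewrite hx0 mxE nabs0.
  by have := bb _ hB _ hlt i; rewrite divfK ?gt_eqF // ltxx.
move=> w; split => -[_ Lw]; (split; first by exists w).
  have hw := bb _ Mb0 w (hM _ Lw).
  have -> : w *m F0 = w *m Fm + w *m (F0 - Fm) by rewrite mulmxBr addrC subrK.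
  exact: LD Lw (small w hw _ hD2).
have hw : forall i, nabs K (w 0 i) < Mb * Cg.
  have -> : w = (w *m F0) *m G by rewrite -mulmxA FG mulmx1.
  by apply: mul_bound_lt => //; apply: hM.
have -> : w *m Fm = w *m F0 + w *m (Fm - F0) by rewrite mulmxBr addrC subrK.
exact: LD Lw (small w hw _ hD).
Qed.
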